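(* There does not exist any generalized right linear one-way jumping finite automaton (GRLOWJFA) that accepts the language $Dc=\{wc: w\in D\}\subseteq\{a,b,c\}^*$, where $D$ is the Dyck language over $\{a,b\}$.
   Context: The Dyck language $D\subseteq\{a,b\}^*$ consists of the words $w$ with $|w|_a=|w|_b$ such that every prefix $u$ of $w$ has $|u|_a\ge|u|_b$ ($a$ opening, $b$ closing bracket; $|w|_a$ counts occurrences of $a$). ''Subword'' means a contiguous factor. A GRLOWJFA is a tuple $\mathcal{A}=(\Sigma,Q,q_0,F,R)$ with $\Sigma$ a finite alphabet, $Q$ a finite state set, $q_0\in Q$, $F\subseteq Q$, and $R\subset Q\times\Sigma^+\times Q$ a finite set of rules such that for each $p\in Q$, $w\in\Sigma^+$ at most one $q$ has $(p,w,q)\in R$ (meaning: go from $p$ to $q$ deleting $w$). $\Sigma_p=\{w:(p,w,q)\in R\text{ for some }q\}$. Configurations lie in $\Sigma^*Q\Sigma^*$. Moves $\curvearrowright$: (1) for $t,u,v\in\Sigma^*$ and $(p,x,q)\in R$: $tpuxv\curvearrowright tuqv$ provided $u$ contains no word of $\Sigma_p$ as a subword and there are no $u_1,x_2\in\Sigma^*$, $u_2,x_1\in\Sigma^+$ with $u=u_1u_2$, $x=x_1x_2$, $u_2x_1=x$; (2) for $x\in\Sigma^+$, $y\in\Sigma^*$ with $y$ containing no word of $\Sigma_p$ as a subword: $xpy\curvearrowright pxy$. The accepted language is $L_{GRL}(\mathcal{A})=\{w\in\Sigma^*: q_0w\curvearrowright^* q_f \text{ for some } q_f\in F\}$. *)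

(* Defs.v *)
From HB Require Import structures.
From mathcomp Require Import all_boot.
Set Implicit Arguments. Unset Strict Implicit. Unset Printing Implicit Defensive.

Inductive abc := La | Lb | Lc.
Definition abc_eqb (x y : abc) : bool :=
  match x, y with La, La | Lb, Lb | Lc, Lc => true | _, _ => false end.
Lemma abc_eqP : Equality.axiom abc_eqb.
Proof. by case; case; constructor. Qed.
HB.instance Definition _ := hasDecEq.Build abc abc_eqP.

Definition dyck (w : seq abc) : Prop :=
  all (fun x => (x == La) || (x == Lb)) w /\
  count_mem La w = count_mem Lb w /\
  (forall n, count_mem Lb (take n w) <= count_mem La (take n w)).

Definition Dc (w : seq abc) : Prop := exists v, dyck v /\ w = rcons v Lc.

Section GRLOWJFA.
Variables (Sigma : eqType) (Q : finType).
Variable R : seq (Q * seq Sigma * Q).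

Definition wf_rules : Prop :=
  (forall p w q, (p, w, q) \in R -> w != [::]) /\
  (forall p w q q', (p, w, q) \in R -> (p, w, q') \in R -> q = q').

Definition no_sub (p : Q) (u : seq Sigma) : Prop :=
  forall w q, (p, w, q) \in R -> ~~ infix w u.

Definition no_overlap (u x : seq Sigma) : Prop :=
  ~ (exists u1 u2 x1 x2 : seq Sigma,
        [/\ u = u1 ++ u2, x = x1 ++ x2, u2 != [::], x1 != [::] & u2 ++ x1 = x]).

(* configuration x p y is represented as (x, p, y) *)
Definition config := (seq Sigma * Q * seq Sigma)%type.

Inductive move : config -> config -> Prop :=
| move_del (t u x v : seq Sigma) (p q : Q) :
    (p, x, q) \in R -> no_sub p u -> no_overlap u x ->
    move (t, p, u ++ x ++ v) (t ++ u, q, v)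
| move_jump (x y : seq Sigma) (p : Q) :
    x != [::] -> no_sub p y -> move (x, p, y) ([::], p, x ++ y).

Inductive moves : config -> config -> Prop :=
| moves_refl c : moves c c
| moves_step c1 c2 c3 : move c1 c2 -> moves c2 c3 -> moves c1 c3.

Definition accepts (q0 : Q) (F : {set Q}) (w : seq Sigma) : Prop :=
  exists qf, qf \in F /\ moves ([::], q0, w) ([::], qf, [::]).

End GRLOWJFA.

(* Main.v *)
Require Import Defs.
From HB Require Import structures.
From mathcomp Require Import all_boot.
From mathcomp Require Import zify.
Set Implicit Arguments. Unset Strict Implicit. Unset Printing Implicit Defensive.

Lemma Dc_rcons w : Dc w -> exists v, w = rcons v Lc /\ Lc \notin v.
Proof.
case=> v [[Hall _] ->]; exists v; split=> //.
apply/negP=> Hc; move/allP: Hall => /(_ _ Hc) /=. by [].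
Qed.

Lemma Dc_count w : Dc w -> count_mem La w = count_mem Lb w.
Proof.
case=> v [[_ [Hcnt _]] ->]. by rewrite -!cats1 !count_cat Hcnt.
Qed.

Lemma dyck_anbn n : dyck (nseq n La ++ nseq n Lb).
Proof.
split; [|split].
- by rewrite all_cat !all_nseq /= orbT.
- by rewrite !count_cat !count_nseq /=; lia.
- move=> i; rewrite take_cat size_nseq.
  case: ltnP => Hi.
  + by rewrite take_nseq ?count_nseq /=; lia.
  + rewrite !count_cat !count_nseq /=.
    case: (leqP (i - n) n) => Hin.
    * by rewrite take_nseq // count_nseq /=; lia.
    * by rewrite take_oversize ?size_nseq ?count_nseq /=; lia.
Qed.

Section Auto.
Variables (Q : finType) (q0 : Q) (F : {set Q}) (R : seq (Q * seq abc * Q)).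
Hypothesis Hwf : wf_rules R.
Hypothesis Hacc : forall w, accepts R q0 F w <-> Dc w.

Notation cfg := (config abc Q).
Notation mv := (move R).
Notation mvs := (moves R).

Inductive rpath : Q -> seq abc -> Q -> Prop :=
| rp_nil p : rpath p [::] p
| rp_cons p x r A q : (p, x, r) \in R -> rpath r A q -> rpath p (x ++ A) q.

Lemma rule_nonempty p x q : (p, x, q) \in R -> x != [::].
Proof. by case: Hwf => H _; apply: H. Qed.

Lemma no_sub_nil p : no_sub R p [::].
Proof.
move=> w q Hin; apply/negP=> /size_infix; rewrite leqn0 => /nilP E.
by move: (rule_nonempty Hin); rewrite E.
Qed.

Lemma no_sub_sub p u u' : no_sub R p u -> infix u' u -> no_sub R p u'.
Proof.
move=> H Hi w q Hin; apply/negP=> Hw.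
by move: (H _ _ Hin); rewrite (infix_trans Hw Hi).
Qed.

Lemma no_overlap_nil (x : seq abc) : no_overlap [::] x.
Proof.
case=> u1 [u2 [x1 [x2 [/(congr1 size) /= /esym/eqP]]]].
by rewrite size_cat addn_eq0 !size_eq0 => /andP [_ /eqP ->].
Qed.

Lemma no_overlap_c (y y' x : seq abc) : y = rcons y' Lc -> Lc \notin x -> no_overlap y x.
Proof.
move=> -> Hx [u1 [u2 [x1 [x2 [Hy Hx12 Hu2 Hx1 Hux]]]]].
case/lastP: u2 Hy Hu2 Hux => [//|u2 z] Hy _ Hux.
have Ez : z = Lc.
  by move: Hy; rewrite -rcons_cat => /rcons_inj [_ ->].
move: Hx; rewrite -Hux mem_cat mem_rcons in_cons Ez eqxx.
by [].
Qed.

Lemma moves_trans c1 c2 c3 : mvs c1 c2 -> mvs c2 c3 -> mvs c1 c3.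
Proof. by elim=> // {}c1 c c' H _ IH H2; apply: moves_step H (IH H2). Qed.

Lemma moves1 c1 c2 : mv c1 c2 -> mvs c1 c2.
Proof. by move=> H; apply: moves_step H (moves_refl _ _). Qed.

Lemma rpath_cat p A q B r : rpath p A q -> rpath q B r -> rpath p (A ++ B) r.
Proof.
elim=> // {}p x s {}A {}q Hin _ IH HB; rewrite -catA; apply: rp_cons Hin (IH HB).
Qed.

Lemma rpath_snoc p A q x r : rpath p A q -> (q, x, r) \in R -> rpath p (A ++ x) r.
Proof.
move=> H Hin; apply: rpath_cat H _; rewrite -[x]cats0; apply: rp_cons Hin (rp_nil _).
Qed.

Lemma direct p A q t y : rpath p A q -> mvs (t, p, A ++ y) (t, q, y).
Proof.
elim=> [p0|{}p x r {}A {}q Hin _ IH]; first (simpl; exact: moves_refl).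
apply: moves_step IH; rewrite -catA.
have := move_del t (A ++ y) Hin (@no_sub_nil p) (@no_overlap_nil x).
by rewrite cats0.
Qed.

Lemma pieces c1 c2 : mvs c1 c2 ->
  exists P, rpath c1.1.2 P c2.1.2 /\ perm_eq (c1.1.1 ++ c1.2) (P ++ c2.1.1 ++ c2.2).
Proof.
elim=> [c|{}c1 c c' H _ [P [HP Hperm]]]; first by exists [::]; split=> //; exact: rp_nil.
case: H HP Hperm => [t u x v p q Hin _ _|x y p _ _] /= HP Hperm.
- exists (x ++ P); split; first exact: rp_cons Hin HP.
  apply: (@perm_trans _ (x ++ (t ++ u) ++ v)); last first.
    by rewrite -[(x ++ P) ++ _]catA perm_cat2l.
  by rewrite catA perm_catCA.
- by exists P.
Qed.

Lemma accept_path A qf : rpath q0 A qf -> qf \in F -> Dc A.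
Proof.
move=> HA HF; apply/Hacc; exists qf; split=> //.
by have := direct [::] [::] HA; rewrite cats0.
Qed.

Lemma noC P q t y qf : rpath q0 P q -> mvs (t, q, y) ([::], qf, [::]) -> qf \in F ->
  t ++ y != [::] -> Lc \notin P.
Proof.
move=> HP Hm HF Hne; case: (pieces Hm) => /= Rest [HR Hperm].
have Hs := perm_size Hperm; rewrite /= !cats0 in Hs.
have HRne : Rest != [::] by rewrite -size_eq0 -Hs size_eq0.
have [v [Ev Hv]] := Dc_rcons (accept_path (rpath_cat HP HR) HF).
case/lastP: Rest HRne Ev {HR Hperm Hs} => [//|R' z] _.
rewrite -rcons_cat => /rcons_inj [Ev' _].
by apply: contra Hv; rewrite -Ev' mem_cat => ->.
Qed.

Lemma last_c_del (u x v z : seq abc) : u ++ x ++ v = rcons z Lc -> Lc \notin x ->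
  x != [::] -> exists v', v = rcons v' Lc.
Proof.
case/lastP: v => [|v' w]; last first.
  by rewrite catA -rcons_cat => /rcons_inj [_ ->] _; exists v'.
rewrite cats0; case/lastP: x => [//|x' w].
rewrite -rcons_cat => /rcons_inj [_ ->].
by rewrite mem_rcons in_cons eqxx.
Qed.

Definition Lmax := foldr (fun e m => maxn (size e.1.2) m) 0 R.

Lemma rule_size p x q : (p, x, q) \in R -> size x <= Lmax.
Proof.
rewrite /Lmax; elim: R => [//|e R' IH] /=; rewrite in_cons => /orP [/eqP <-|/IH H].
- by rewrite leq_maxl.
- by rewrite (leq_trans H) // leq_maxr.
Qed.

Definition acc_from (cf : cfg) := exists qf, qf \in F /\ mvs cf ([::], qf, [::]).

Lemma rpath_inv p M q : rpath p M q -> M != [::] ->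
  exists x r M', [/\ M = x ++ M', (p, x, r) \in R & rpath r M' q].
Proof. by case=> [//|{}p x r A {}q Hin HA] _; exists x, r, A. Qed.

Lemma T3 p Y A t q y y' M :
  rpath q0 A p -> t != [::] -> no_sub R q y -> y = rcons y' Lc ->
  acc_from ([::], q, t ++ y) ->
  (forall E, mvs ([::], p, Y ++ E) (t, q, y ++ E)) ->
  rpath q M q -> M != [::] -> Lc \notin M -> False.
Proof.
move=> HA Ht Hns Hy [qf [HF Hrest]] HAP HM HMne HMc.
have [x [r [M' [EM Hin HM']]]] := rpath_inv HM HMne.
have Hxc : Lc \notin x by apply: contra HMc; rewrite EM mem_cat => ->.
have Hbad : mvs ([::], q0, A ++ Y ++ M) ([::], qf, [::]).
  apply: moves_trans (direct [::] (Y ++ M) HA) _.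
  apply: moves_trans (HAP M) _.
  rewrite EM.
  have H1 := move_del t M' Hin Hns (no_overlap_c Hy Hxc).
  apply: moves_step H1 _.
  have Hd := direct (t ++ y) [::] HM'; rewrite cats0 in Hd.
  apply: moves_trans Hd _.
  have Hty : t ++ y != [::] by rewrite -size_eq0 size_cat addn_eq0 size_eq0 negb_and Ht.
  have H2 := move_jump Hty (@no_sub_nil q).
  rewrite cats0 in H2; exact: moves_step H2 Hrest.
have [v [Ev Hv]] := Dc_rcons (proj1 (Hacc _) (ex_intro _ qf (conj HF Hbad))).
clear -EM HMne HMc Ev.
case/lastP: M EM HMne HMc Ev => [//|M0 z] EM _ HMc.
rewrite catA -rcons_cat => /rcons_inj [_ Ez].
by move: HMc; rewrite mem_rcons in_cons Ez eqxx.
Qed.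

Definition c0 := Lmax.+1 * #|Q|.+1.

Definition Hend_prop (p : Q) (Y : seq abc) (s : nat) := forall t q y Mi m W',
  t != [::] -> no_sub R q y -> (exists y', y = rcons y' Lc) ->
  acc_from ([::], q, t ++ y) ->
  rpath p Mi q -> Mi != [::] -> perm_eq Y (Mi ++ t ++ y) ->
  (forall E, mvs ([::], p, Y ++ E) (t, q, y ++ E)) ->
  t ++ y = nseq m La ++ W' -> (exists w', W' = rcons w' Lc) ->
  s <= c0 * (m + Lmax) + Lmax * #|Q| -> False.

Lemma perm_del (Mi t u x v : seq abc) :
  perm_eq (Mi ++ t ++ (u ++ x ++ v)) ((Mi ++ x) ++ (t ++ u) ++ v).
Proof. by rewrite -catA perm_cat2l catA perm_catCA. Qed.

Lemma cat_neq0l (s1 s2 : seq abc) : s1 != [::] -> s1 ++ s2 != [::].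
Proof. by rewrite -!size_eq0 size_cat addn_eq0 negb_and => ->. Qed.

Lemma cat_neq0r (s1 s2 : seq abc) : s2 != [::] -> s1 ++ s2 != [::].
Proof. by rewrite -!size_eq0 size_cat addn_eq0 negb_and => ->; rewrite orbT. Qed.

Lemma post_exit A p Y s qf :
  qf \in F -> rpath q0 A p -> Hend_prop p Y s ->
  forall X cF, mvs X cF -> cF = ([::], qf, [::]) ->
  forall t q y Mi m t', X = (t, q, y) -> t != [::] -> t = nseq m La ++ t' ->
  s <= c0 * (m + Lmax) + Lmax * #|Q| -> (exists y', y = rcons y' Lc) ->
  rpath p Mi q -> Mi != [::] -> perm_eq Y (Mi ++ t ++ y) ->
  (forall E, mvs ([::], p, Y ++ E) (t, q, y ++ E)) -> False.
Proof.
move=> HF HA Hend X cF Hm; elim: Hm => [cf|c1 c2 c3 Hmv Hm23 IH] EF t q y Mi m t' EX Ht Htm Hb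
  Hy HMi HMine Hperm HAP.
  by move: EX; rewrite EF => -[Et _ _]; move: Ht; rewrite -Et.
move: Ht Htm Hb Hy HMi HMine Hperm HAP.
case: Hmv EX IH Hm23 => [t0 u x v p0 q' Hin Hns Hno|x0 y0 p0 Hx0 Hns] [Et Ep Ey] IH Hm23;
  [subst t0 p0|subst x0 p0]; rewrite -Ey => Ht Htm Hb [y' Hy] HMi HMine Hperm HAP.
- have Hxc : Lc \notin x.
    have HP : rpath q0 (A ++ (Mi ++ x)) q' := rpath_cat HA (rpath_snoc HMi Hin).
    have Hm' : mvs (t ++ u, q', v) ([::], qf, [::]) by rewrite -EF.
    have := noC HP Hm' HF (cat_neq0l _ (cat_neq0l _ Ht)).
    by apply: contra; rewrite !mem_cat => ->; rewrite !orbT.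
  apply: (IH EF (t ++ u) q' v (Mi ++ x) m (t' ++ u)) => //.
  + exact: cat_neq0l.
  + by rewrite Htm catA.
  + exact: (last_c_del Hy Hxc (rule_nonempty Hin)).
  + exact: rpath_snoc HMi Hin.
  + exact: cat_neq0l.
  + exact: perm_trans Hperm (perm_del _ _ _ _ _).
  + move=> E; apply: moves_trans (HAP E) _; rewrite -!catA.
    exact: moves1 (move_del t (v ++ E) Hin Hns Hno).
- have Hm' : mvs ([::], q, t ++ y0) ([::], qf, [::]) by rewrite -EF.
  have Hty : t ++ y0 = nseq m La ++ (t' ++ y0) by rewrite Htm catA.
  have Hw : exists w', t' ++ y0 = rcons w' Lc by exists (t' ++ y'); rewrite Hy rcons_cat.
  exact: (Hend t q y0 Mi m (t' ++ y0) Ht Hns (ex_intro _ y' Hy) (ex_intro _ qf (conj HF Hm'))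
    HMi HMine Hperm HAP Hty Hw Hb).
Qed.

Lemma cat_eq_split (s1 s2 t1 t2 : seq abc) : size s1 = size s2 -> s1 ++ t1 = s2 ++ t2 ->
  s1 = s2 /\ t1 = t2.
Proof. by move=> Hs /eqP; rewrite eqseq_cat // => /andP [/eqP -> /eqP ->]. Qed.

Lemma nseq_split (r s : nat) : r <= s -> nseq s La = nseq (s - r) La ++ nseq r La.
Proof. by move=> H; rewrite -nseqD subnK. Qed.

Lemma split_block r (W u x v : seq abc) : u ++ x ++ v = nseq r La ++ W ->
  size u + size x <= r ->
  [/\ u = nseq (size u) La, x = nseq (size x) La & v = nseq (r - size u - size x) La ++ W].
Proof.
move=> E H.
have E1 : nseq r La = nseq (size u) La ++ nseq (r - size u) La by rewrite -nseqD subnKC //; lia.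
rewrite E1 -catA in E; have [Eu E'] := cat_eq_split (esym (size_nseq _ _)) E.
have E2 : nseq (r - size u) La = nseq (size x) La ++ nseq (r - size u - size x) La.
  by rewrite -nseqD subnKC //; lia.
rewrite E2 -catA in E'; have [Ex E''] := cat_eq_split (esym (size_nseq _ _)) E'.
by split.
Qed.

Lemma exit_block r (W u x v : seq abc) : u ++ x ++ v = nseq r La ++ W ->
  u = nseq (minn (size u) r) La ++ drop (minn (size u) r) u.
Proof.
move=> E; rewrite -{1}(cat_take_drop (minn (size u) r) u); congr (_ ++ _).
have H1 : take (minn (size u) r) (u ++ x ++ v) = take (minn (size u) r) u.
  by rewrite takel_cat // geq_minl.
have Hmr : minn (size u) r <= r := geq_minr _ _.
by rewrite -H1 E takel_cat ?size_nseq // take_nseq.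
Qed.

Lemma cntA n : count_mem La (nseq n La) = n.
Proof. by rewrite count_nseq /= mul1n. Qed.
Lemma cntB n : count_mem Lb (nseq n La) = 0.
Proof. by rewrite count_nseq /= mul0n. Qed.

Lemma loop_removal A p s W k q r1 re :
  rpath q0 A p -> count_mem La (A ++ nseq s La ++ W) = count_mem Lb (A ++ nseq s La ++ W) ->
  (forall Z, mvs ([::], p, nseq (s - re) La ++ Z) (nseq k La, q, Z)) ->
  acc_from (nseq k La, q, nseq r1 La ++ W) -> r1 < re -> r1 < s -> False.
Proof.
move=> HA Hbal HPR [qf [HF Hm]] H1 H2.
have Hb : mvs ([::], q0, A ++ nseq (s - re) La ++ nseq r1 La ++ W) ([::], qf, [::]).
  apply: moves_trans (direct [::] _ HA) _.
  exact: moves_trans (HPR _) Hm.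
have := Dc_count (proj1 (Hacc _) (ex_intro _ qf (conj HF Hb))).
move: Hbal; rewrite !count_cat !cntA !cntB; lia.
Qed.

Lemma uniq_size (st : seq Q) : uniq st -> size st <= #|Q|.
Proof. by move/card_uniqP <-; exact: max_card. Qed.

Lemma arith_j j lx L sg N : 0 < j -> lx <= L -> sg < N ->
  j + lx + L * sg <= L.+1 * N.+1 * j.
Proof. move=> *; nia. Qed.

Lemma c0_pos : 0 < c0.
Proof. by rewrite /c0 muln_gt0. Qed.

Lemma in_block A p s W0 qf :
  qf \in F -> rpath q0 A p ->
  count_mem La (A ++ nseq s La ++ rcons W0 Lc) = count_mem Lb (A ++ nseq s La ++ rcons W0 Lc) ->
  Lmax * #|Q| + Lmax < s -> Hend_prop p (nseq s La ++ rcons W0 Lc) s ->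
  forall X cF, mvs X cF -> cF = ([::], qf, [::]) ->
  forall k q r Mi (st : seq (Q * nat)),
   X = (nseq k La, q, nseq r La ++ rcons W0 Lc) ->
   r <= s -> s <= r + c0 * k + Lmax * size st -> uniq (q :: map fst st) ->
   (forall e, e \in st -> r <= e.2 /\
      forall Z, mvs ([::], p, nseq (s - e.2) La ++ Z) (nseq k La, e.1, Z)) ->
   (forall Z, mvs ([::], p, nseq (s - r) La ++ Z) (nseq k La, q, Z)) ->
   rpath p Mi q -> (Mi = [::] -> k = 0) ->
   perm_eq (nseq s La ++ rcons W0 Lc) (Mi ++ nseq k La ++ nseq r La ++ rcons W0 Lc) -> False.
Proof.
move=> HF HA Hbal Hs Hend X cF Hm; elim: Hm => [cf|c1 c2 c3 Hmv Hm23 IH] EF k q r Mi st EX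
  Hrs Hpot Huniq Hst HPR HMi HMi0 Hperm.
  move: EX; rewrite EF => -[_ _ /(congr1 size)].
  by rewrite size_cat size_rcons /=; lia.
have Hsz : (size st).+1 <= #|Q| by have := uniq_size Huniq; rewrite /= size_map.
have HLs : Lmax * size st <= Lmax * #|Q| by rewrite leq_mul2l ltnW ?orbT.
have Hc0 := c0_pos.
case: Hmv EX IH Hm23 => [t0 u x v p0 q' Hin Hns Hno|x0 y0 p0 Hx0 Hns] [Et Ep Ey] IH Hm23;
  [subst t0 p0|subst x0 p0 y0].
2: { (* jump inside the block *)
  have Hm' : mvs ([::], q, nseq k La ++ nseq r La ++ rcons W0 Lc) ([::], qf, [::]) by rewrite -EF.
  have HMine : Mi != [::].
    by apply/eqP => E; move: Hx0; rewrite (HMi0 E).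
  have HAP : forall E, mvs ([::], p, (nseq s La ++ rcons W0 Lc) ++ E)
                         (nseq k La, q, (nseq r La ++ rcons W0 Lc) ++ E).
    move=> E; have := HPR ((nseq r La ++ rcons W0 Lc) ++ E).
    by rewrite (nseq_split Hrs) -!catA.
  have Hty : nseq k La ++ nseq r La ++ rcons W0 Lc = nseq (k + r) La ++ rcons W0 Lc.
    by rewrite nseqD catA.
  apply: (Hend _ _ _ Mi (k + r) (rcons W0 Lc) Hx0 Hns _ (ex_intro _ qf (conj HF Hm'))
     HMi HMine Hperm HAP Hty (ex_intro _ W0 erefl)).
  - by exists (nseq r La ++ W0); rewrite rcons_cat.
  - have H1 : r <= c0 * r by rewrite leq_pmull.
    rewrite !mulnDr; lia. }
have Hm' : mvs (nseq k La ++ u, q', v) ([::], qf, [::]) by rewrite -EF.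
have Hx1 : 0 < size x by rewrite lt0n size_eq0 (rule_nonempty Hin).
have HxL : size x <= Lmax := rule_size Hin.
case: (leqP (size u + size x) r) => Hux.
- (* deletion inside the block *)
  have [Eu Ex Ev] := split_block Ey Hux.
  case: (posnP (size u)) => Hj.
  +
    have Eu0 : u = [::] by apply/nilP; rewrite /nilp Hj.
    subst u; rewrite Hj subn0 in Ev; rewrite cats0 in Hm' Hm23.
    set r1 := r - size x.
    have Hr1 : r1 < r by rewrite /r1; lia.
    have HPR' : forall Z, mvs ([::], p, nseq (s - r1) La ++ Z) (nseq k La, q', Z).
      move=> Z; have H1 := HPR (x ++ Z).
      have H2 := move_del (nseq k La) Z Hin Hns Hno; rewrite cats0 in H2.
      have := moves_trans H1 (moves1 H2).
      by rewrite {1}Ex catA -nseqD; have -> : s - r + size x = s - r1 by rewrite /r1; lia.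
    case: (boolP (q' \in q :: map fst st)) => Hq'.
    * rewrite in_cons in Hq'; case/orP: Hq' => [/eqP Eq|/mapP [e He Ee]].
      - subst q'.
        apply: (loop_removal HA Hbal HPR (ex_intro _ qf (conj HF _)) Hr1 (leq_trans Hr1 Hrs)).
        by rewrite -Ev.
      - have [Hre HPRe] := Hst e He; rewrite -Ee in HPRe.
        apply: (loop_removal HA Hbal HPRe (ex_intro _ qf (conj HF _)) (leq_trans Hr1 Hre)
          (leq_trans Hr1 Hrs)).
        by rewrite -Ev.
    * apply: (IH EF k q' r1 (Mi ++ x) ((q, r) :: st)).
      - by rewrite Ev cats0.
      - exact: leq_trans (ltnW Hr1) Hrs.
      - by rewrite /= mulnS; move: Hpot; rewrite /r1; lia.
      - by rewrite /= Hq' /=; move: Huniq => /= ->.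
      - move=> e; rewrite in_cons => /orP [/eqP -> /=|He].
          by split; [exact: ltnW|].
        by have [H1 H2] := Hst e He; split=> //; exact: leq_trans (ltnW Hr1) H1.
      - exact: HPR'.
      - exact: rpath_snoc HMi Hin.
      - by move/eqP; rewrite -size_eq0 size_cat; lia.
      - rewrite -Ey in Hperm.
        by have := perm_trans Hperm (perm_del Mi (nseq k La) [::] x v); rewrite cats0 Ev.
  +
    set j := size u in Eu Ev Hj Hux.
    set r1 := r - j - size x.
    have HPR' : forall Z, mvs ([::], p, nseq (s - r1) La ++ Z) (nseq (k + j) La, q', Z).
      move=> Z; have H1 := HPR (u ++ x ++ Z).
      have H2 := move_del (nseq k La) Z Hin Hns Hno.
      have E1 : nseq (s - r) La ++ (u ++ x ++ Z) = nseq (s - r1) La ++ Z.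
        have Ea : s - r1 = (s - r) + j + size x by rewrite /r1; lia.
        by rewrite Ea !nseqD {1}Eu {1}Ex -!catA.
      have E2 : nseq k La ++ u = nseq (k + j) La by rewrite {1}Eu nseqD.
      by have := moves_trans H1 (moves1 H2); rewrite E1 E2.
    apply: (IH EF (k + j) q' r1 (Mi ++ x) [::]).
    - by rewrite Ev {1}Eu nseqD.
    - by rewrite /r1; lia.
    - have Ha := arith_j Hj HxL Hsz; rewrite -/c0 in Ha.
      rewrite /= muln0 addn0 mulnDr; move: Hpot Ha; rewrite /r1; lia.
    - by [].
    - by [].
    - exact: HPR'.
    - exact: rpath_snoc HMi Hin.
    - by move/eqP; rewrite -size_eq0 size_cat; lia.
    - rewrite -Ey in Hperm.
      have := perm_trans Hperm (perm_del Mi (nseq k La) u x v).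
      by rewrite Ev {1}Eu -(nseqD k j La).
- (* exit from the block *)
  case: (boolP ((k == 0) && (u == [::]))) => Hku.
    case/andP: Hku => /eqP Ek /eqP Eu; subst k u.
    move: Hpot Hux; rewrite muln0 addn0 /= => Hpot Hux. move: Hpot Hux HxL HLs Hs. set sx := size x. lia.
  have Ht1 : nseq k La ++ u != [::].
    rewrite -size_eq0 size_cat size_nseq.
    by move: Hku; rewrite negb_and -size_eq0; case/orP; lia.
  set mn := minn (size u) r.
  have Eu : u = nseq mn La ++ drop mn u := exit_block Ey.
  have Hmn : k + r <= (k + mn) + Lmax by rewrite /mn; lia.
  have Hxc : Lc \notin x.
    have HP : rpath q0 (A ++ (Mi ++ x)) q' := rpath_cat HA (rpath_snoc HMi Hin).
    have := noC HP Hm' HF (cat_neq0l _ Ht1).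
    by apply: contra; rewrite !mem_cat => ->; rewrite !orbT.
  have Ey' : u ++ x ++ v = rcons (nseq r La ++ W0) Lc by rewrite Ey rcons_cat.
  have Hv := last_c_del Ey' Hxc (rule_nonempty Hin).
  have Htm : nseq k La ++ u = nseq (k + mn) La ++ drop mn u by rewrite {1}Eu catA -nseqD.
  have Hb : s <= c0 * (k + mn + Lmax) + Lmax * #|Q|.
    have H1 : r <= c0 * r by rewrite leq_pmull.
    have H2 : c0 * (k + r) <= c0 * (k + mn + Lmax) by rewrite leq_mul2l Hmn orbT.
    move: H2; rewrite mulnDr; lia.
  have Hperm' : perm_eq (nseq s La ++ rcons W0 Lc) ((Mi ++ x) ++ (nseq k La ++ u) ++ v).
    by rewrite -Ey in Hperm; exact: perm_trans Hperm (perm_del _ _ _ _ _).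
  have HAP : forall E, mvs ([::], p, (nseq s La ++ rcons W0 Lc) ++ E)
                         (nseq k La ++ u, q', v ++ E).
    move=> E; have H1 := HPR (u ++ x ++ v ++ E).
    have H2 := move_del (nseq k La) (v ++ E) Hin Hns Hno.
    have := moves_trans H1 (moves1 H2).
    move: (congr1 (fun z => z ++ E) Ey); rewrite -!catA => EE.
    by rewrite EE (nseq_split Hrs) -!catA.
  exact: (post_exit HF HA Hend Hm23 EF (t := nseq k La ++ u) (q := q') (y := v) (Mi := Mi ++ x)
    (m := k + mn) (t' := drop mn u) erefl Ht1 Htm Hb Hv (rpath_snoc HMi Hin)
    (cat_neq0r _ (rule_nonempty Hin)) Hperm' HAP).
Qed.

Lemma sweep A p s W0 :
  Lmax * #|Q| + Lmax < s -> rpath q0 A p ->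
  count_mem La (A ++ nseq s La ++ rcons W0 Lc) = count_mem Lb (A ++ nseq s La ++ rcons W0 Lc) ->
  acc_from ([::], p, nseq s La ++ rcons W0 Lc) ->
  Hend_prop p (nseq s La ++ rcons W0 Lc) s -> False.
Proof.
move=> Hs HA Hbal [qf [HF Hm]] Hend.
apply: (in_block HF HA Hbal Hs Hend Hm erefl (k := 0) (q := p) (r := s) (Mi := [::]) (st := [::]))
  => //.
all: try (by rewrite /= muln0 !addn0); try (by move=> Z; rewrite subnn; exact: moves_refl);
  try exact: rp_nil.
by rewrite muln0 /= muln0 !addn0.
Qed.

Fixpoint Bnd (k : nat) : nat :=
  if k is k'.+1 then c0 * (Bnd k' + Lmax) + Lmax * #|Q| + Lmax + 1
  else Lmax * #|Q| + Lmax + 1.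

Lemma Bnd_ge k : Lmax * #|Q| + Lmax < Bnd k.
Proof. case: k => [|k] /=; lia. Qed.

Lemma outer kk : forall (U : {set Q}) p A s W0,
  #|Q| <= #|U| + kk -> Bnd kk <= s -> rpath q0 A p ->
  count_mem La (A ++ nseq s La ++ rcons W0 Lc) = count_mem Lb (A ++ nseq s La ++ rcons W0 Lc) ->
  acc_from ([::], p, nseq s La ++ rcons W0 Lc) ->
  (forall r, r \in U -> exists M, rpath r M p /\ Lc \notin M) -> False.
Proof.
elim: kk => [|kk IH] U p A s W0 HU Hs HA Hbal Hac HUp;
  apply: (sweep (leq_trans (Bnd_ge _) Hs) HA Hbal Hac);
  move=> t q y Mi m W' Ht Hns [y' Hy] Hacc' HMi HMine Hperm HAP Hty [w' Hw] Hb;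
  (have HcMi : Lc \notin Mi by
    case: (Hacc') => qf' [HF' Hm'];
    have := noC (rpath_cat HA HMi) Hm' HF' (cat_neq0l _ Ht);
    by apply: contra; rewrite mem_cat => ->; rewrite orbT);
  (case: (boolP (q \in U)) => HqU;
   [ have [M [HM HMc]] := HUp q HqU;
     apply: (T3 HA Ht Hns Hy Hacc' HAP (rpath_cat HM HMi) (cat_neq0r _ HMine));
     by rewrite mem_cat negb_or HMc HcMi | ]).
- have H1 := max_card (mem (q |: U)); rewrite cardsU1 HqU /= in H1.
  by have := leq_trans H1 HU; rewrite addn0 add1n ltnn.
- have Hbal' : count_mem La ((A ++ Mi) ++ nseq m La ++ rcons w' Lc) =
               count_mem Lb ((A ++ Mi) ++ nseq m La ++ rcons w' Lc).
    have Hp : perm_eq (A ++ nseq s La ++ rcons W0 Lc) ((A ++ Mi) ++ nseq m La ++ rcons w' Lc).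
      by rewrite -Hw -Hty -catA perm_cat2l.
    by rewrite -!(permP Hp).
  apply: (IH (q |: U) q (A ++ Mi) m w') => //.
  + by rewrite cardsU1 HqU; lia.
  + have H1 : c0 * (Bnd kk + Lmax) < c0 * (m + Lmax) by move: Hs Hb => /=; lia.
    by rewrite ltn_pmul2l ?c0_pos in H1; lia.
  + exact: rpath_cat HA HMi.
  + by rewrite -Hw -Hty.
  + move=> r; rewrite in_setU1 => /orP [/eqP ->|HrU].
      by exists [::]; split; [exact: rp_nil|].
    have [M [HM HMc]] := HUp r HrU.
    exists (M ++ Mi); split; first exact: rpath_cat HM HMi.
    by rewrite mem_cat negb_or HMc HcMi.
Qed.

Lemma main_false : False.
Proof.
set n := Bnd #|Q|.
apply: (@outer #|Q| set0 q0 [::] n (nseq n Lb)) => //.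
- by rewrite cards0.
- exact: rp_nil.
- by rewrite /= !count_cat -cats1 !count_cat !count_nseq /=; lia.
- apply/Hacc; exists (nseq n La ++ nseq n Lb); split; first exact: dyck_anbn.
  by rewrite rcons_cat.
- by move=> r; rewrite in_set0.
Qed.
End Auto.

Theorem lemma6 :
  ~ exists (Q : finType) (q0 : Q) (F : {set Q}) (R : seq (Q * seq abc * Q)),
      wf_rules R /\ (forall w : seq abc, accepts R q0 F w <-> Dc w).
Proof. by case=> Q [q0 [F [R [Hwf Hacc]]]]; exact: (main_false Hwf Hacc). Qed.
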